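(* If $Q$ is a Jordan loop and $x\in Q$, then $x^3$, $x^4$ and $x^5$ are well-defined.
   Context: A loop is a set $Q$ with a binary operation (juxtaposition) and neutral element $e$ such that for all $a,b$ the equations $ax=b$, $ya=b$ have unique solutions. A Jordan loop is a commutative loop satisfying $x^2(yx)=(x^2y)x$. For $k\ge 0$, $x^k$ denotes the right-associated product $L_x^k(e)=x(x(\cdots(xe)\cdots))$ with $k$ factors $x$ (so $x^0=e$). We say $x^k$ is well-defined if every way of bracketing a product of $k$ copies of $x$ gives the same value. *)

(* Defs.v *)
From Stdlib Require Import Arith.

Definition is_loop {Q : Type} (op : Q -> Q -> Q) (e : Q) : Prop :=
  (forall a, op e a = a /\ op a e = a) /\
  (forall a b, exists! x, op a x = b) /\
  (forall a b, exists! y, op y a = b).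

Definition is_jordan_loop {Q : Type} (op : Q -> Q -> Q) (e : Q) : Prop :=
  is_loop op e /\
  (forall a b, op a b = op b a) /\
  (forall x y, op (op x x) (op y x) = op (op (op x x) y) x).

Inductive bracketing : Type :=
| BLeaf : bracketing
| BNode : bracketing -> bracketing -> bracketing.

Fixpoint nleaves (t : bracketing) : nat :=
  match t with
  | BLeaf => 1
  | BNode l r => nleaves l + nleaves r
  end.

Fixpoint beval {Q : Type} (op : Q -> Q -> Q) (x : Q) (t : bracketing) : Q :=
  match t with
  | BLeaf => x
  | BNode l r => op (beval op x l) (beval op x r)
  end.

Definition lpow {Q : Type} (op : Q -> Q -> Q) (e x : Q) (k : nat) : Q :=
  Nat.iter k (op x) e.

Definition pow_well_defined {Q : Type} (op : Q -> Q -> Q) (x : Q) (k : nat) : Prop :=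
  forall t1 t2 : bracketing, nleaves t1 = k -> nleaves t2 = k ->
    beval op x t1 = beval op x t2.

(* Main.v *)
Require Import Defs.
From Stdlib Require Import Arith Lia.

Lemma nleaves_pos t : 1 <= nleaves t.
Proof. induction t; simpl; lia. Qed.

Section S.
Variables (Q : Type) (op : Q -> Q -> Q) (x : Q).
Hypothesis C : forall a b, op a b = op b a.
Hypothesis J : forall x y, op (op x x) (op y x) = op (op (op x x) y) x.

Definition c2 := op x x.
Definition c3 := op x c2.
Definition c4 := op x c3.
Definition c5 := op x c4.

Lemma L1 t : nleaves t = 1 -> beval op x t = x.
Proof.
  destruct t as [|l r]; simpl; auto.
  pose proof (nleaves_pos l); pose proof (nleaves_pos r); lia.
Qed.

Lemma L2 t : nleaves t = 2 -> beval op x t = c2.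
Proof.
  destruct t as [|l r]; simpl; [lia|]. intros H.
  pose proof (nleaves_pos l); pose proof (nleaves_pos r).
  rewrite (L1 l), (L1 r) by lia. reflexivity.
Qed.

Lemma L3 t : nleaves t = 3 -> beval op x t = c3.
Proof.
  destruct t as [|l r]; simpl; [lia|]. intros H.
  pose proof (nleaves_pos l); pose proof (nleaves_pos r).
  unfold c3.
  destruct (Nat.eq_dec (nleaves l) 1).
  - rewrite (L1 l), (L2 r) by lia. reflexivity.
  - rewrite (L2 l), (L1 r) by lia. apply C.
Qed.

Lemma c4alt : op c2 c2 = c4.
Proof.
  unfold c4, c3, c2. pose proof (J x x) as H. rewrite H.
  rewrite C. f_equal. apply C.
Qed.

Lemma L4 t : nleaves t = 4 -> beval op x t = c4.
Proof.
  destruct t as [|l r]; simpl; [lia|]. intros H.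
  pose proof (nleaves_pos l); pose proof (nleaves_pos r).
  destruct (Nat.eq_dec (nleaves l) 1); [|destruct (Nat.eq_dec (nleaves l) 2)].
  - rewrite (L1 l), (L3 r) by lia. reflexivity.
  - rewrite (L2 l), (L2 r) by lia. apply c4alt.
  - rewrite (L3 l), (L1 r) by lia. unfold c4. apply C.
Qed.

Lemma c5alt : op c2 c3 = c5.
Proof.
  unfold c5. pose proof (J x c2) as H. fold c2 in H.
  replace (op c2 x) with c3 in H by (unfold c3; apply C).
  rewrite H, c4alt. apply C.
Qed.

Lemma L5 t : nleaves t = 5 -> beval op x t = c5.
Proof.
  destruct t as [|l r]; simpl; [lia|]. intros H.
  pose proof (nleaves_pos l); pose proof (nleaves_pos r).
  destruct (Nat.eq_dec (nleaves l) 1); [|destruct (Nat.eq_dec (nleaves l) 2);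
    [|destruct (Nat.eq_dec (nleaves l) 3)]].
  - rewrite (L1 l), (L4 r) by lia. reflexivity.
  - rewrite (L2 l), (L3 r) by lia. apply c5alt.
  - rewrite (L3 l), (L2 r) by lia. rewrite C. apply c5alt.
  - rewrite (L4 l), (L1 r) by lia. unfold c5. apply C.
Qed.
End S.

Theorem lemma2p1 (Q : Type) (op : Q -> Q -> Q) (e : Q)
  (HQ : is_jordan_loop op e) (x : Q) :
  pow_well_defined op x 3 /\ pow_well_defined op x 4 /\ pow_well_defined op x 5.
Proof.
  destruct HQ as [_ [C J]].
  repeat split; intros t1 t2 H1 H2.
  - rewrite (L3 Q op x C t1 H1), (L3 Q op x C t2 H2). reflexivity.
  - rewrite (L4 Q op x C J t1 H1), (L4 Q op x C J t2 H2). reflexivity.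
  - rewrite (L5 Q op x C J t1 H1), (L5 Q op x C J t2 H2). reflexivity.
Qed.
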